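(* Let $F$ be the class of all two-sorted term-modal frames (for the fixed agent set $\mathcal{A}$). For every formula $\varphi$ of the language $\mathcal{L}$: if $\vdash_{\mathbf{K}_{TM}}\varphi$, then $\models_F\varphi$, i.e. $\varphi$ is valid on every frame in $F$.
   Context: Fix a finite nonempty set of agents $\mathcal{A}=\{\alpha_1,\dots,\alpha_n\}$ and two sorts $agt$, $obj$. The language $\mathcal{L}$ has: countably infinite sets $VAR_{agt}$, $VAR_{obj}$ of variables; a countable (possibly empty) set of constants, each with a sort; a countable (possibly empty) set of function symbols, each with an arity $\alpha\in\{agt,obj\}^{k+1}$, $k\ge 0$ (first $k$ entries: argument sorts; last entry: value sort); a countable (possibly empty) set of relation symbols, each with an arity $\beta\in\{agt,obj\}^k$, $k\ge 1$; the symbol $=$; $\neg,\to$; $\forall$; and a modal operator $K_t$ for every agent-sorted term $t$. Terms: variables, constants, and $f(t_1,\dots,t_k)$ with $t_i$ of sort $\alpha_i$ (of sort $\alpha_{k+1}$). Formulas: $t_1=t_2$ (any terms), $P(t_1,\dots,t_k)$ ($t_i$ of sort $\beta_i$), $\neg\varphi$, $\varphi\to\psi$, $\forall x\varphi$, $K_t\varphi$ ($t$ agent-sorted). Other connectives as usual, $\exists x:=\neg\forall x\neg$, $P_t:=\neg K_t\neg$. Free variables as usual, except that the free variables of $K_t\varphi$ are those of $t$ together with those of $\varphi$. $\varphi(t/x)$ denotes substitution of $t$ for the free occurrences of $x$ (renaming bound variables so no variable of $t$ becomes bound). A frame is $\langle W,\mathcal{R},DOM\rangle$ with $W\neq\emptyset$,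 $\mathcal{R}:\mathcal{A}\to\mathcal{P}(W\times W)$, and $DOM=DOM_{agt}\sqcup DOM_{obj}$ a disjoint union of nonempty sets with $DOM_{agt}=\mathcal{A}$. An interpretation $\mathcal{I}$ assigns to each relation symbol $P$ of arity $\beta$ and world $w$ a set $\mathcal{I}(P,w)\subseteq\prod_{i=1}^k DOM_{\beta_i}$; to each function symbol $f$ of arity $\alpha$ and $w$ a set $\mathcal{I}(f,w)\subseteq\prod_{i=1}^{k+1}DOM_{\alpha_i}$; $\mathcal{I}(=,w)=\{(d,d):d\in DOM\}$; to each constant $c$ of sort $\sigma$ and $w$ an element $\mathcal{I}(c,w)\in DOM_\sigma$. A model is a frame plus an interpretation (it is ''based on'' the frame). A valuation $v$ maps each $VAR_\sigma$ surjectively onto $DOM_\sigma$; an $x$-variant of $v$ agrees with $v$ except possibly at $x$. Extensions: $t^{w,v}=v(t)$ for a variable, $\mathcal{I}(t,w)$ for a constant. Truth: $\mathcal M,w\models_v P(t_1,\dots,t_k)$ iff $(t_1^{w,v},\dots,t_k^{w,v})\in\mathcal{I}(P,w)$; $\mathcal M,w\models_v t_1=t_2$ iff $t_1^{w,v}=t_2^{w,v}$; $\neg,\to$ classically; $\mathcal M,w\models_v\forall x\varphi$ iff $\mathcal M,w\models_{v'}\varphi$ for every $x$-variant $v'$ of $v$; $\mathcal M,w\models_v K_t\varphi$ iff $\mathcal M,w'\models_v\varphi$ for all $w'$ with $(w,w')\in\mathcal{R}(t^{w,v})$. A formula is valid in a frame if it is true at every world under every valuation in every model based on the frame; valid on a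 class of frames if valid in each of its frames. The system $\mathbf{K}_{TM}$: axioms are all substitution instances (by formulas of $\mathcal L$) of valid formulas of propositional modal logic, together with: ($\forall$) $\forall x\varphi\to\varphi(y/x)$ for any formula $\varphi$ and variable $y$ free in $\varphi$; (Id) $t=t$ for every term $t$; (MSD) $x\neq y$ for $x\in VAR_{agt}$, $y\in VAR_{obj}$; (PS) $(x=y)\to(\varphi(x)\to\varphi(y))$ for variables $x,y$ and formulas $\varphi$ (with $x,y$ agent-sorted when they occur as modal indices); ($\exists$Id) $(c=c)\to\exists x(x=c)$ for every constant $c$; (N) $\exists x_1\cdots\exists x_n\big(x_1\neq x_2\wedge\dots\wedge x_{n-1}\neq x_n\wedge\forall y(y=x_1\vee\dots\vee y=x_n)\big)$ for agent variables $x_1,\dots,x_n,y$, $n=|\mathcal A|$; (K) $K_t(\varphi\to\psi)\to(K_t\varphi\to K_t\psi)$; (BF) $\forall xK_t\varphi\to K_t\forall x\varphi$ for agent-sorted $t$ and variable $x\neq t$; (KNI) $(x\neq y)\to K_t(x\neq y)$ for variables $x,y$ and agent-sorted $t$. Rules: modus ponens; (KG) from $\varphi$ infer $K_t\varphi$ for agent-sorted $t$; (Gen) from $\varphi\to\psi$ infer $\varphi\to\forall x\psi$ when $x$ is not free in $\varphi$. $\vdash_{\mathbf{K}_{TM}}\varphi$ means $\varphi$ is the last line of a finite sequence each of whose members is an axiom or follows from earlier ones by a rule. *)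

(* Defs.v *)
From mathcomp Require Import all_boot.
From Stdlib Require Import List.

Set Implicit Arguments.
Unset Strict Implicit.
Unset Printing Implicit Defensive.

Inductive sort := Agt | Obj.

Definition sort_eqb (s t : sort) : bool :=
  match s, t with Agt, Agt | Obj, Obj => true | _, _ => false end.

(* VAR_sigma = { (sigma, n) | n : nat } : countably infinite for each sort *)
Definition var := (sort * nat)%type.

Definition var_eqb (x y : var) : bool :=
  sort_eqb x.1 y.1 && Nat.eqb x.2 y.2.

Fixpoint memb (x : var) (l : list var) : bool :=
  match l with nil => false | y :: l' => var_eqb x y || memb x l' end.

Record signature := Signature {
  csym : countType;
  csort : csym -> sort;
  fsym : countType;
  fargs : fsym -> list sort;
  fres : fsym -> sort;
  rsym : countType;
  rargs : rsym -> list sort;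
  rargs_ne : forall P, rargs P <> nil
}.

Section Syntax.
Variable Sg : signature.

Inductive term :=
  | TVar (x : var)
  | TConst (c : csym Sg)
  | TApp (f : fsym Sg) (ts : list term).

Inductive form :=
  | FEq (t1 t2 : term)
  | FPred (P : rsym Sg) (ts : list term)
  | FNeg (phi : form)
  | FImp (phi psi : form)
  | FAll (x : var) (phi : form)
  | FK (t : term) (phi : form).

Definition tsort (t : term) : sort :=
  match t with
  | TVar x => x.1
  | TConst c => csort c
  | TApp f _ => fres f
  end.

Fixpoint wf_term (t : term) : Prop :=
  match t with
  | TVar _ => True
  | TConst _ => True
  | TApp f ts =>
      List.map tsort ts = fargs f /\
      (fix all_wf (l : list term) : Prop :=
         match l with nil => True | u :: l' => wf_term u /\ all_wf l' end) ts
  end.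

Definition wf_terms (l : list term) : Prop := forall t, In t l -> wf_term t.

Fixpoint wf_form (phi : form) : Prop :=
  match phi with
  | FEq t1 t2 => wf_term t1 /\ wf_term t2
  | FPred P ts => List.map tsort ts = rargs P /\ wf_terms ts
  | FNeg p => wf_form p
  | FImp p q => wf_form p /\ wf_form q
  | FAll _ p => wf_form p
  | FK t p => wf_term t /\ tsort t = Agt /\ wf_form p
  end.

Fixpoint tfv (t : term) : list var :=
  match t with
  | TVar x => x :: nil
  | TConst _ => nil
  | TApp _ ts => List.flat_map tfv ts
  end.

Fixpoint fv (phi : form) : list var :=
  match phi with
  | FEq t1 t2 => tfv t1 ++ tfv t2
  | FPred _ ts => List.flat_map tfv ts
  | FNeg p => fv p
  | FImp p q => fv p ++ fv q
  | FAll x p => List.filter (fun u => negb (var_eqb u x)) (fv p)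
  | FK t p => tfv t ++ fv p
  end.

Definition fresh (s : sort) (l : list var) : var :=
  (s, S (List.fold_right (fun u m => Nat.max u.2 m) 0 l)).

Definition upd_sub (sg : var -> term) (x : var) (t : term) : var -> term :=
  fun u => if var_eqb u x then t else sg u.

Fixpoint tsubst (sg : var -> term) (t : term) : term :=
  match t with
  | TVar x => sg x
  | TConst c => TConst c
  | TApp f ts => TApp f (List.map (tsubst sg) ts)
  end.

(* capture-avoiding simultaneous substitution: a bound variable is
   renamed (to a fresh one of the same sort) only when it would capture. *)
Fixpoint fsubst (sg : var -> term) (phi : form) : form :=
  match phi with
  | FEq t1 t2 => FEq (tsubst sg t1) (tsubst sg t2)
  | FPred P ts => FPred P (List.map (tsubst sg) ts)
  | FNeg p => FNeg (fsubst sg p)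
  | FImp p q => FImp (fsubst sg p) (fsubst sg q)
  | FAll z p =>
      let others := List.filter (fun u => negb (var_eqb u z)) (fv p) in
      let capture := List.existsb (fun u => memb z (tfv (sg u))) others in
      let z' := if capture
                then fresh z.1 (z :: fv p ++ List.flat_map (fun u => tfv (sg u)) others)
                else z in
      FAll z' (fsubst (upd_sub sg z (TVar z')) p)
  | FK t p => FK (tsubst sg t) (fsubst sg p)
  end.

Definition subst1 (phi : form) (t : term) (x : var) : form :=
  fsubst (upd_sub TVar x t) phi.

Definition FAnd (p q : form) : form := FNeg (FImp p (FNeg q)).
Definition FOr (p q : form) : form := FImp (FNeg p) q.
Definition FEx (x : var) (p : form) : form := FNeg (FAll x (FNeg p)).
Definition FNeq (t1 t2 : term) : form := FNeg (FEq t1 t2).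

Fixpoint big_and (a : form) (l : list form) : form :=
  match l with nil => a | b :: l' => FAnd a (big_and b l') end.
Fixpoint big_or (a : form) (l : list form) : form :=
  match l with nil => a | b :: l' => FOr a (big_or b l') end.
Fixpoint big_ex (xs : list var) (p : form) : form :=
  match xs with nil => p | x :: xs' => FEx x (big_ex xs' p) end.

Fixpoint chain_neq (xs : list var) : list form :=
  match xs with
  | x1 :: ((x2 :: _) as xs') => FNeq (TVar x1) (TVar x2) :: chain_neq xs'
  | _ => nil
  end.

Definition N_form (xs : list var) (y : var) : form :=
  let disj := match xs with
              | nil => FEq (TVar y) (TVar y) (* unused: n >= 1 *)
              | x1 :: xs' => big_or (FEq (TVar y) (TVar x1))
                                    (List.map (fun x => FEq (TVar y) (TVar x)) xs')
              end in
  let allp := FAll y disj in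
  big_ex xs (match chain_neq xs with
             | nil => allp
             | c :: cs => big_and c (cs ++ allp :: nil)
             end).

Inductive pform :=
  | PAtom (i : nat)
  | PNeg (p : pform)
  | PImp (p q : pform)
  | PBox (i : nat) (p : pform).

Fixpoint psat (W : Type) (Rm : nat -> W -> W -> Prop) (val : nat -> W -> Prop)
  (w : W) (p : pform) : Prop :=
  match p with
  | PAtom i => val i w
  | PNeg q => ~ psat Rm val w q
  | PImp q r => psat Rm val w q -> psat Rm val w r
  | PBox i q => forall w', Rm i w w' -> psat Rm val w' q
  end.

Definition pvalid (p : pform) : Prop :=
  forall (W : Type) (Rm : nat -> W -> W -> Prop) (val : nat -> W -> Prop) (w : W),
    psat Rm val w p.

Fixpoint pinst (sa : nat -> form) (sb : nat -> term) (p : pform) : form :=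
  match p with
  | PAtom i => sa i
  | PNeg q => FNeg (pinst sa sb q)
  | PImp q r => FImp (pinst sa sb q) (pinst sa sb r)
  | PBox i q => FK (sb i) (pinst sa sb q)
  end.

Inductive KTM_axiom (n : nat) : form -> Prop :=
  | AxTaut p sa sb : pvalid p -> KTM_axiom n (pinst sa sb p)
  | AxAll (x y : var) phi :
      In y (fv phi) -> y.1 = x.1 ->
      KTM_axiom n (FImp (FAll x phi) (subst1 phi (TVar y) x))
  | AxId t : KTM_axiom n (FEq t t)
  | AxMSD (x y : var) : x.1 = Agt -> y.1 = Obj ->
      KTM_axiom n (FNeq (TVar x) (TVar y))
  | AxPS (x y : var) phi :
      KTM_axiom n (FImp (FEq (TVar x) (TVar y))
                        (FImp phi (subst1 phi (TVar y) x)))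
  | AxExId (c : csym Sg) (x : var) : x.1 = csort c ->
      KTM_axiom n (FImp (FEq (TConst c) (TConst c))
                        (FEx x (FEq (TVar x) (TConst c))))
  | AxN (xs : list var) (y : var) :
      length xs = n -> NoDup (y :: xs) -> (forall u, In u (y :: xs) -> u.1 = Agt) ->
      KTM_axiom n (N_form xs y)
  | AxK t phi psi :
      KTM_axiom n (FImp (FK t (FImp phi psi)) (FImp (FK t phi) (FK t psi)))
  | AxBF (x : var) t phi : ~ In x (tfv t) ->
      KTM_axiom n (FImp (FAll x (FK t phi)) (FK t (FAll x phi)))
  | AxKNI (x y : var) t :
      KTM_axiom n (FImp (FNeq (TVar x) (TVar y)) (FK t (FNeq (TVar x) (TVar y)))).

(* Every line of a derivation is a formula of L (well-formed); sort
   restrictions such as "t agent-sorted" are enforced by wf_form. *)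
Inductive KTM_provable (n : nat) : form -> Prop :=
  | PrAx phi : KTM_axiom n phi -> wf_form phi -> KTM_provable n phi
  | PrMP phi psi : KTM_provable n phi -> KTM_provable n (FImp phi psi) ->
      KTM_provable n psi
  | PrKG t phi : wf_term t -> tsort t = Agt -> KTM_provable n phi ->
      KTM_provable n (FK t phi)
  | PrGen (x : var) phi psi : ~ In x (fv phi) -> KTM_provable n (FImp phi psi) ->
      KTM_provable n (FImp phi (FAll x psi)).

Section Semantics.
Variables (A : finType) (W : Type) (D : Type).

(* DOM = DOM_agt (= A) disjoint-union DOM_obj (= D) *)
Definition dom := (A + D)%type.
Definition dsort (d : dom) : sort := match d with inl _ => Agt | inr _ => Obj end.

(* An interpretation (the relation R belongs to the frame). *)
Record interp := Interp {
  Ic : csym Sg -> W -> dom;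
  If : fsym Sg -> W -> list dom -> dom;
  Ip : rsym Sg -> W -> list dom -> Prop
}.

Definition interp_ok (I : interp) : Prop :=
  (forall c w, dsort (Ic I c w) = csort c) /\
  (forall f w ds, List.map dsort ds = fargs f -> dsort (If I f w ds) = fres f) /\
  (forall P w ds, Ip I P w ds -> List.map dsort ds = rargs P).

Definition assignment := var -> dom.
Definition sorted_asg (v : assignment) : Prop := forall x, dsort (v x) = x.1.
Definition valuation (v : assignment) : Prop :=
  sorted_asg v /\ forall (s : sort) (d : dom), dsort d = s -> exists k, v (s, k) = d.

Definition upd (v : assignment) (x : var) (d : dom) : assignment :=
  fun u => if var_eqb u x then d else v u.

Variables (R : A -> W -> W -> Prop) (I : interp).

Fixpoint eval (w : W) (v : assignment) (t : term) : dom :=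
  match t with
  | TVar x => v x
  | TConst c => Ic I c w
  | TApp f ts => If I f w (List.map (eval w v) ts)
  end.

Fixpoint sat (w : W) (v : assignment) (phi : form) : Prop :=
  match phi with
  | FEq t1 t2 => eval w v t1 = eval w v t2
  | FPred P ts => Ip I P w (List.map (eval w v) ts)
  | FNeg p => ~ sat w v p
  | FImp p q => sat w v p -> sat w v q
  | FAll x p => forall d, dsort d = x.1 -> sat w (upd v x d) p
  | FK t p =>
      match eval w v t with
      | inl a => forall w', R a w w' -> sat w' v p
      | inr _ => True   (* impossible for well-formed K_t phi *)
      end
  end.

End Semantics.

Definition valid_in_frame (A : finType) (W D : Type) (R : A -> W -> W -> Prop)
  (phi : form) : Prop :=
  forall (I : interp A W D), interp_ok I ->
  forall (w : W) (v : assignment A D), valuation v -> sat R I w v phi.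

Definition valid_all_frames (A : finType) (phi : form) : Prop :=
  forall (W D : Type), inhabited W -> inhabited D ->
  forall (R : A -> W -> W -> Prop), @valid_in_frame A W D R phi.

End Syntax.

(* Main.v *)
Require Import Defs.
From mathcomp Require Import all_boot.
From Stdlib Require Import List FunctionalExtensionality Lia.

Lemma sort_eqbP s t : sort_eqb s t = true <-> s = t.
Proof. destruct s, t; simpl; split; congruence. Qed.

Lemma var_eqbP x y : var_eqb x y = true <-> x = y.
Proof.
  destruct x as [s n], y as [t m]; unfold var_eqb; simpl.
  rewrite Bool.andb_true_iff sort_eqbP PeanoNat.Nat.eqb_eq.
  split; [intros [-> ->]; reflexivity | intros H; inversion H; auto].
Qed.

Lemma var_eqb_refl x : var_eqb x x = true.
Proof. apply var_eqbP; reflexivity. Qed.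

Lemma var_eqb_false x y : x <> y -> var_eqb x y = false.
Proof. intros H; destruct (var_eqb x y) eqn:E; auto. apply var_eqbP in E; tauto. Qed.

Lemma memb_In x l : memb x l = true <-> In x l.
Proof.
  induction l as [|y l IH]; simpl. split; intros H; [discriminate|destruct H].
  rewrite Bool.orb_true_iff IH var_eqbP. split; intros [H|H]; auto.
Qed.

Lemma fresh_notin s l : ~ In (fresh s l) l.
Proof.
  unfold fresh. assert (forall y, In y l -> y.2 <= List.fold_right (fun u m => Nat.max u.2 m) 0 l)%coq_nat.
  { induction l as [|a l IH]; simpl; [tauto|]. intros y [<-|H].
    - apply PeanoNat.Nat.le_max_l.
    - eapply PeanoNat.Nat.le_trans; [apply IH, H|apply PeanoNat.Nat.le_max_r]. }
  intros Hin. apply H in Hin. simpl in Hin. lia.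
Qed.

Section Term_ind.
Variable Sg : signature.
Variable P : term Sg -> Prop.
Hypothesis HV : forall x, P (TVar Sg x).
Hypothesis HC : forall c, P (TConst c).
Hypothesis HA : forall f ts, Forall P ts -> P (TApp f ts).
Fixpoint term_ind' (t : term Sg) : P t :=
  match t with
  | TVar x => HV x
  | TConst c => HC c
  | TApp f ts => HA f ts ((fix go (l : list (term Sg)) : Forall P l :=
       match l with nil => Forall_nil _ | u :: l' => Forall_cons _ (term_ind' u) (go l') end) ts)
  end.
End Term_ind.

Section Sem.
Variables (Sg : signature) (A : finType) (W D : Type) (R : A -> W -> W -> Prop)
  (I : interp Sg A W D).

Lemma eval_ext (t : term Sg) w (v v' : assignment A D) :
  (forall u, In u (tfv t) -> v u = v' u) -> eval I w v t = eval I w v' t.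
Proof.
  induction t as [x|c|f ts IH] using term_ind'; simpl; intros H; auto.
  f_equal. apply map_ext_in. intros a Ha. rewrite Forall_forall in IH.
  apply IH; auto. intros u Hu; apply H, in_flat_map; eauto.
Qed.

Lemma upd_same (v : assignment A D) x d : upd v x d x = d.
Proof. unfold upd; now rewrite var_eqb_refl. Qed.

Lemma upd_other (v : assignment A D) x d u : u <> x -> upd v x d u = v u.
Proof. intros H; unfold upd; now rewrite var_eqb_false. Qed.

Lemma sat_ext (phi : form Sg) : forall w (v v' : assignment A D),
  (forall u, In u (fv phi) -> v u = v' u) -> (sat R I w v phi <-> sat R I w v' phi).
Proof.
  induction phi as [t1 t2|P ts|p IH|p IHp q IHq|x p IH|t p IH]; simpl; intros w v v' H.
  - rewrite (eval_ext t1 w v v') ?(eval_ext t2 w v v'); [tauto| |];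
      intros u Hu; apply H, in_or_app; auto.
  - rewrite (map_ext_in (eval I w v) (eval I w v')); [tauto|].
    intros a Ha; apply eval_ext; intros u Hu; apply H, in_flat_map; eauto.
  - rewrite (IH w v v' H); tauto.
  - rewrite (IHp w v v') ?(IHq w v v'); [tauto| |]; intros u Hu; apply H, in_or_app; auto.
  - split; intros Hs d Hd; specialize (Hs d Hd);
      (eapply IH; [|exact Hs]); intros u Hu; unfold upd;
      destruct (var_eqb u x) eqn:E; auto;
      [symmetry|]; apply H, filter_In; rewrite E; auto.
  - rewrite (eval_ext t w v v'); [|intros u Hu; apply H, in_or_app; auto].
    destruct (eval I w v' t); [|tauto].
    split; intros Hs w' Hw'; specialize (Hs w' Hw'); (eapply IH; [|exact Hs]);
      intros u Hu; [symmetry|]; apply H, in_or_app; auto.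
Qed.

Lemma eval_subst (t : term Sg) w (v : assignment A D) sg :
  eval I w v (tsubst sg t) = eval I w (fun u => eval I w v (sg u)) t.
Proof.
  induction t as [x|c|f ts IH] using term_ind'; simpl; auto.
  f_equal. rewrite map_map. apply map_ext_in. intros a Ha. rewrite Forall_forall in IH. auto.
Qed.

Definition varsub (sg : var -> term Sg) := forall u, exists y, sg u = TVar Sg y.

Lemma varsub_world (sg : var -> term Sg) w w' (v : assignment A D) : varsub sg ->
  (fun u => eval I w v (sg u)) = (fun u => eval I w' v (sg u)).
Proof. intros H; apply functional_extensionality; intros u; destruct (H u) as [y ->]; reflexivity. Qed.

Lemma sat_subst (phi : form Sg) : forall sg w (v : assignment A D), varsub sg ->
  (sat R I w v (fsubst sg phi) <-> sat R I w (fun u => eval I w v (sg u)) phi).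
Proof.
  induction phi as [t1 t2|P ts|p IH|p IHp q IHq|z p IH|t p IH]; simpl; intros sg w v Hsg.
  - rewrite !eval_subst; tauto.
  - rewrite map_map. rewrite (map_ext _ _ (fun t => eval_subst t w v sg)). tauto.
  - rewrite IH; tauto.
  - rewrite IHp ?IHq; tauto.
  - set (others := List.filter _ _).
    set (capture := List.existsb _ _).
    set (z' := if capture then _ else z).
    assert (Hz' : z'.1 = z.1) by (unfold z'; destruct capture; reflexivity).
    assert (Hsg' : varsub (upd_sub sg z (TVar Sg z'))).
    { intros u; unfold upd_sub; destruct (var_eqb u z); eauto. }
    rewrite Hz'.
    enough (Hk : forall d, sat R I w (upd v z' d) (fsubst (upd_sub sg z (TVar Sg z')) p) <->
       sat R I w (upd (fun u => eval I w v (sg u)) z d) p).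
    { split; intros Hs d Hd; apply Hk; auto; apply Hs; auto. }
    intros d.
    rewrite IH; auto. apply sat_ext. intros u Hu.
    unfold upd_sub, upd at 2. destruct (var_eqb u z) eqn:E; simpl.
    + apply upd_same.
    + assert (Hin : In u others) by (apply filter_In; rewrite E; auto).
      destruct (Hsg u) as [y Hy]. rewrite Hy; simpl. apply upd_other.
      intros ->. unfold z' in Hy. destruct capture eqn:Ec.
      * apply (fresh_notin z.1 (z :: fv p ++ List.flat_map (fun u => tfv (sg u)) others)).
        right; apply in_or_app; right; apply in_flat_map. exists u; split; auto.
        rewrite Hy; simpl; auto.
      * assert (Hc : capture = true); [|congruence].
        apply existsb_exists. exists u; split; auto. rewrite Hy; simpl.
        rewrite var_eqb_refl; reflexivity.
  - rewrite eval_subst. destruct (eval I w _ t); [|tauto].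
    split; intros Hs w' Hw'; specialize (Hs w' Hw'); 
    [rewrite IH in Hs|rewrite IH]; auto; rewrite (varsub_world sg w' w v Hsg) in Hs |- *; auto.
Qed.

End Sem.

Section Sem3.
Variables (Sg : signature) (A : finType) (W D : Type) (R : A -> W -> W -> Prop)
  (I : interp Sg A W D).

Lemma pinst_sat (v : assignment A D) sa sb p : forall w,
  psat (fun i w w' => match eval I w v (sb i) with inl a => R a w w' | inr _ => False end)
       (fun i w => sat R I w v (sa i)) w p <-> sat R I w v (pinst sa sb p).
Proof.
  induction p as [i|p IH|p IHp q IHq|i p IH]; simpl; intros w.
  - tauto.
  - rewrite IH; tauto.
  - rewrite IHp IHq; tauto.
  - destruct (eval I w v (sb i)).
    + split; intros H w' Hw'; apply IH; auto.
    + split; intros; [exact Logic.I | contradiction].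
Qed.

Fixpoint upds (v : assignment A D) (xs : list var) (l : list A) : assignment A D :=
  match xs, l with
  | x :: xs', a :: l' => upds (upd v x (inl a)) xs' l'
  | _, _ => v
  end.

Lemma upds_notin xs : forall l v u, ~ In u xs -> upds v xs l u = v u.
Proof.
  induction xs as [|x xs IH]; intros [|a l] v u H; simpl; auto.
  rewrite IH; [|simpl in H; tauto]. apply upd_other. intros ->; simpl in H; tauto.
Qed.

Lemma upds_in xs : forall l v, NoDup xs -> length xs = length l ->
  Forall2 (fun x a => upds v xs l x = inl a) xs l.
Proof.
  induction xs as [|x xs IH]; intros [|a l] v Hn Hl; simpl in *; try discriminate; constructor.
  - inversion Hn; subst. rewrite upds_notin; auto. apply upd_same.
  - inversion Hn; subst. apply IH; auto.
Qed.

Lemma big_ex_intro w xs : forall l v p, length xs = length l ->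
  (forall x, In x xs -> x.1 = Agt) -> sat R I w (upds v xs l) p -> sat R I w v (big_ex xs p).
Proof.
  induction xs as [|x xs IH]; intros [|a l] v p Hl Hs H; simpl in *; try discriminate; auto.
  intros Hn. apply (Hn (inl a)). simpl; symmetry; auto.
  apply IH with l; auto.
Qed.

Lemma big_or_intro w v a l : (sat R I w v a \/ exists b, In b l /\ sat R I w v b) ->
  sat R I w v (big_or a l).
Proof.
  revert a; induction l as [|b l IH]; intros a [H|[b' [Hb Hs]]]; simpl in *; auto.
  - contradiction.
  - intros Hn; contradiction.
  - intros _. apply IH. destruct Hb as [<-|Hb]; [left|right; exists b']; auto.
Qed.

Lemma big_and_intro w v a l : sat R I w v a -> (forall b, In b l -> sat R I w v b) ->
  sat R I w v (big_and a l).
Proof.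
  revert a; induction l as [|b l IH]; intros a Ha Hl; simpl; auto.
  intros H. apply (H Ha). apply IH; [apply Hl; simpl; auto | intros; apply Hl; simpl; auto].
Qed.

Lemma chain_sat (w : W) (v : assignment A D) (xs : list var) : forall (l : list A), Forall2 (fun x a => v x = inl a) xs l -> uniq l ->
  forall f, In f (chain_neq Sg xs) -> sat R I w v f.
Proof.
  induction xs as [|x1 xs IH]; intros l HF Hu f Hf; [destruct Hf|].
  destruct xs as [|x2 rest]; [destruct Hf|].
  inversion HF as [|? a1 ? l1 H1 HF1]; subst.
  inversion HF1 as [|? a2 ? l2 H2 HF2]; subst.
  simpl in Hf. destruct Hf as [<-|Hf].
  - simpl. rewrite H1 H2. intros E; injection E as E. subst.
    by move: Hu; rewrite cons_uniq seq.in_cons eqxx.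
  - apply (IH (a2 :: l2)); auto. by move: Hu; rewrite cons_uniq => /andP [].
Qed.

Lemma Forall2_mem (P : var -> A -> Prop) xs l a : Forall2 P xs l -> a \in l ->
  exists x, In x xs /\ P x a.
Proof.
  induction 1 as [|x b xs l Hx HF IH]; [by []|].
  rewrite seq.in_cons => /orP [/eqP ->|Ha]; [exists x; simpl; auto|].
  destruct (IH Ha) as [y [Hy Hp]]; exists y; simpl; auto.
Qed.

Lemma N_sat (w : W) (v : assignment A D) (xs : list var) (y : var) : length xs = #|A| -> NoDup (y :: xs) ->
  (forall u, In u (y :: xs) -> u.1 = Agt) -> sat R I w v (N_form Sg xs y).
Proof.
  intros Hl Hn Hs. unfold N_form.
  apply big_ex_intro with (enum A).
  { rewrite Hl cardE. reflexivity. }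
  { intros x Hx; apply Hs; simpl; auto. }
  set (v' := upds v xs (enum A)).
  assert (HF : Forall2 (fun x a => v' x = inl a) xs (enum A)).
  { apply upds_in; [inversion Hn; auto|]. rewrite Hl cardE; reflexivity. }
  assert (Hall : sat R I w v' (FAll y (match xs with
              | nil => FEq (TVar Sg y) (TVar Sg y)
              | x1 :: xs' => big_or (FEq (TVar Sg y) (TVar Sg x1))
                                    (List.map (fun x => FEq (TVar Sg y) (TVar Sg x)) xs')
              end))).
  { simpl. intros [a|d] Hd; [|simpl in Hd; rewrite (Hs y) in Hd; [discriminate|simpl; auto]].
    destruct (@Forall2_mem _ _ _ a HF) as [x [Hx Hv]]; [by rewrite mem_enum|].
    assert (Hxy : x <> y) by (intros ->; inversion Hn; tauto).
    destruct xs as [|x1 xs']; [destruct Hx|].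
    apply big_or_intro. simpl. rewrite upd_same.
    destruct Hx as [<-|Hx]; [left|right].
    - rewrite upd_other; auto.
    - exists (FEq (TVar Sg y) (TVar Sg x)); split; [apply (List.in_map (fun x => FEq (TVar Sg y) (TVar Sg x))); auto|].
      simpl; rewrite upd_same upd_other; auto. }
  destruct (chain_neq Sg xs) as [|c cs] eqn:Ec; auto.
  assert (Hc : forall f, In f (chain_neq Sg xs) -> sat R I w v' f).
  { apply chain_sat with (enum A); auto. apply enum_uniq. }
  rewrite Ec in Hc.
  apply big_and_intro; [apply Hc; simpl; auto|].
  intros b Hb. apply in_app_or in Hb. destruct Hb as [Hb|[<-|[]]]; auto.
  apply Hc; simpl; auto.
Qed.

End Sem3.

Lemma sorted_upd (A : finType) (D : Type) (v : assignment A D) x d :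
  sorted_asg v -> dsort d = x.1 -> sorted_asg (upd v x d).
Proof.
  intros Hv Hd u. unfold upd. destruct (var_eqb u x) eqn:E; auto.
  apply var_eqbP in E; subst; auto.
Qed.

Lemma subst1_sat (Sg : signature) (A : finType) (W D : Type) (R : A -> W -> W -> Prop)
  (I : interp Sg A W D) w (v : assignment A D) (phi : form Sg) x y :
  sat R I w v (subst1 phi (TVar Sg y) x) <-> sat R I w (upd v x (v y)) phi.
Proof.
  unfold subst1. rewrite sat_subst.
  - assert (E : (fun u => eval I w v (upd_sub (TVar Sg) x (TVar Sg y) u)) = upd v x (v y)).
    { apply functional_extensionality; intros u; unfold upd_sub, upd.
      destruct (var_eqb u x); reflexivity. }
    rewrite E; tauto.
  - intros u; unfold upd_sub; destruct (var_eqb u x); eauto.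
Qed.

Lemma soundness (Sg : signature) (A : finType) (phi : form Sg) :
  KTM_provable #|A| phi ->
  forall (W D : Type) (R : A -> W -> W -> Prop) (I : interp Sg A W D), interp_ok I ->
  forall w (v : assignment A D), sorted_asg v -> sat R I w v phi.
Proof.
  induction 1 as [phi Hax _|phi psi _ IH1 _ IH2|t phi _ _ _ IH|x phi psi Hx _ IH];
    intros W D R I HI w v Hv.
  - destruct Hax as [p sa sb Hp|x y phi Hy Hxy|t|x y Hx Hy|x y phi|c x Hx|xs y Hl Hn Hs
                    |t phi psi|x t phi Hx|x y t]; simpl.
    + apply pinst_sat; apply Hp.
    + intros H. apply subst1_sat. apply H. rewrite Hv; auto.
    + reflexivity.
    + intros E. pose proof (Hv x) as H1. pose proof (Hv y) as H2. rewrite E in H1.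
      rewrite H1 in H2. rewrite Hx Hy in H2. discriminate.
    + intros E H. apply subst1_sat. rewrite <- E.
      replace (upd v x (v x)) with v; auto.
      apply functional_extensionality; intros u; unfold upd.
      destruct (var_eqb u x) eqn:Eu; auto. apply var_eqbP in Eu; subst; auto.
    + intros _ H. apply (H (Ic I c w)).
      * destruct HI as [Hc _]. rewrite Hc; auto.
      * simpl. apply upd_same.
    + apply N_sat; auto.
    + destruct (eval I w v t); auto.
    + intros H. destruct (eval I w v t) eqn:E; auto.
      intros w' Hw' d Hd. specialize (H d Hd). simpl in H.
      rewrite (@eval_ext _ _ _ _ I t w (upd v x d) v) in H.
      * rewrite E in H; auto.
      * intros u Hu; apply upd_other; intros ->; contradiction.
    + intros H. destruct (eval I w v t); auto.
  - apply (IH2 W D R I HI w v Hv). apply IH1; auto.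
  - simpl. destruct (eval I w v t); auto.
  - simpl. intros Hp d Hd. apply IH; [auto|apply sorted_upd; auto|].
    apply (@sat_ext _ _ _ _ R I phi w (upd v x d) v); auto.
    intros u Hu; apply upd_other; intros ->; contradiction.
Qed.

Theorem theorem6p2 (Sg : signature) (A : finType) (hA : 0 < #|A|)
  (phi : form Sg) :
  KTM_provable #|A| phi -> valid_all_frames A phi.
Proof.
  intros H W D _ _ R I HI w v [Hv _]. eapply soundness; eauto.
Qed.
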